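(* Let $B$ be a Lie algebra over a field $k$ satisfying $\Phi1$: $\forall x_1,\dots,x_4\ (x_1x_2)(x_3x_4)=0$, $\Phi2$: $\forall x,y\ (xyx=0\wedge xyy=0\to xy=0)$ and $\Phi3$: $\forall x,y,z\ (x\ne0\wedge xy=0\wedge xz=0\to yz=0)$. Then the set $\{b\in B: B\models \mathrm{Fit}(b)\}$, where $\mathrm{Fit}(x)\equiv\forall y\,(xyx=0)$, equals $\mathrm{Fit}(B)$. If moreover $B$ is an $F_r$-algebra, then the set $\{b\in B: bа_ib=0 \text{ for all } i=1,\dots,r\}$, i.e. the truth domain of $\mathrm{Fit}'(x)\equiv\bigwedge_{i=1}^r(xa_ix=0)$, also equals $\mathrm{Fit}(B)$.
   Context: Products are left-normed: $xyx=(xy)x$. $\mathrm{Fit}(B)$ is the sum of all nilpotent ideals of $B$. $F_r$ is the free metabelian Lie algebra over $k$ of rank $r\ge 2$ with free base $a_1,\dots,a_r$; an $F_r$-algebra is a Lie algebra containing a designated copy of $F_r$ (so $a_1,\dots,a_r\in B$). *)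

(* Defs.v *)
From HB Require Import structures.
From mathcomp Require Import all_boot all_order all_algebra.
Set Implicit Arguments. Unset Strict Implicit. Unset Printing Implicit Defensive.
Import GRing.Theory.
Local Open Scope ring_scope.

Section LieDefs.
Variable K : fieldType.

Definition is_lie (V : lmodType K) (br : V -> V -> V) : Prop :=
  [/\ (forall (c : K) (x y z : V), br (c *: x + y) z = c *: br x z + br y z),
      (forall (c : K) (x y z : V), br x (c *: y + z) = c *: br x y + br x z),
      (forall x : V, br x x = 0)
    & (forall x y z : V, br (br x y) z + br (br y z) x + br (br z x) y = 0)].

Definition metabelian (V : lmodType K) (br : V -> V -> V) : Prop :=
  forall x1 x2 x3 x4 : V, br (br x1 x2) (br x3 x4) = 0.

Definition lie_hom (V W : lmodType K) (brV : V -> V -> V) (brW : W -> W -> W)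
  (f : V -> W) : Prop :=
  (forall (c : K) (x y : V), f (c *: x + y) = c *: f x + f y) /\
  (forall x y : V, f (brV x y) = brW (f x) (f y)).

Definition is_free_metabelian (r : nat) (F : lmodType K) (brF : F -> F -> F)
  (a : 'I_r -> F) : Prop :=
  [/\ is_lie brF, metabelian brF &
  forall (M : lmodType K) (brM : M -> M -> M) (m : 'I_r -> M),
    is_lie brM -> metabelian brM ->
    exists f : F -> M, [/\ lie_hom brF brM f, (forall i, f (a i) = m i) &
      forall g : F -> M, lie_hom brF brM g -> (forall i, g (a i) = m i) ->
        forall x, g x = f x]].

Definition is_ideal (V : lmodType K) (br : V -> V -> V) (I : V -> Prop) : Prop :=
  [/\ I 0, (forall (c : K) (x y : V), I x -> I y -> I (c *: x + y))
    & (forall x y : V, I y -> I (br x y))].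

Definition lnprod (V : lmodType K) (br : V -> V -> V) (s : seq V) : V :=
  match s with [::] => 0 | x :: t => foldl br x t end.

Definition nilpotent_ideal (V : lmodType K) (br : V -> V -> V) (I : V -> Prop) : Prop :=
  is_ideal br I /\
  exists n : nat, forall s : seq V, size s = n.+1 -> (forall x, x \in s -> I x) ->
    lnprod br s = 0.

(* Fit(B): the sum of all nilpotent ideals, i.e. the set of finite sums of
   elements each lying in some nilpotent ideal. *)
Definition Fit (V : lmodType K) (br : V -> V -> V) (b : V) : Prop :=
  exists s : seq V, (forall x, x \in s -> exists I, nilpotent_ideal br I /\ I x) /\
    b = \sum_(x <- s) x.

Definition Phi1 (V : lmodType K) (br : V -> V -> V) : Prop := metabelian br.
Definition Phi2 (V : lmodType K) (br : V -> V -> V) : Prop :=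
  forall x y : V, br (br x y) x = 0 -> br (br x y) y = 0 -> br x y = 0.
Definition Phi3 (V : lmodType K) (br : V -> V -> V) : Prop :=
  forall x y z : V, x <> 0 -> br x y = 0 -> br x z = 0 -> br y z = 0.

End LieDefs.

(* Main.v *)
Require Import Defs.
From HB Require Import structures.
From mathcomp Require Import all_boot all_order all_algebra.
From mathcomp Require Import ring.
Import GRing.Theory.
Local Open Scope ring_scope.

Section Aux.
Variables (K : fieldType) (B : lmodType K) (br : B -> B -> B).
Hypotheses (HL : is_lie br) (H1 : Phi1 br) (H2 : Phi2 br) (H3 : Phi3 br).

Lemma brDl x y z : br (x + y) z = br x z + br y z.
Proof. case: HL => L _ _ _. by have := L 1 x y z; rewrite !scale1r. Qed.

Lemma brZl c x z : br (c *: x) z = c *: br x z.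
Proof.
case: HL => L _ _ _.
have h0 : br 0 z = 0.
  have h := L 1 0 0 z; rewrite !scale1r addr0 in h.
  by apply: (addrI (br 0 z)); rewrite addr0 -h.
by have := L c x 0 z; rewrite addr0 h0 addr0.
Qed.

Lemma br0l z : br 0 z = 0.
Proof. by have := brZl 0 0 z; rewrite !scale0r. Qed.

Lemma brNl x z : br (- x) z = - br x z.
Proof. by rewrite -scaleN1r brZl scaleN1r. Qed.

Lemma br_anti x y : br x y = - br y x.
Proof.
case: HL => L R A _.
have Ar : forall u v w, br u (v + w) = br u v + br u w.
  by move=> u v w; have := R 1 u v w; rewrite !scale1r.
have := A (x + y); rewrite brDl !Ar !A add0r addr0 => /eqP.
by rewrite addr_eq0 => /eqP.
Qed.

Definition T (b : B) := forall y z, br b (br y z) = 0.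

Lemma S_T b : (forall y, br (br b y) b = 0) -> T b.
Proof.
move=> S y z; case: (eqVneq (br b (br y z)) 0) => // Hu.
have Hu' : br b (br y z) <> 0 by apply/eqP.
apply: (H3 _ _ _ Hu').
  rewrite br_anti. by apply/eqP; rewrite oppr_eq0; apply/eqP; rewrite br_anti S oppr0.
by apply: H1.
Qed.

Lemma T_S b : T b -> forall y, br (br b y) b = 0.
Proof. by move=> Tb y; rewrite br_anti Tb oppr0. Qed.

Lemma T_ideal : is_ideal br T.
Proof.
split.
- by move=> y z; rewrite br0l.
- by move=> c x y Tx Ty p q; rewrite brDl brZl Tx Ty scaler0 addr0.
- by move=> x y _ p q; apply: H1.
Qed.

Lemma T_nil : nilpotent_ideal br T.
Proof.
split; first exact: T_ideal.
exists 2%N => s; case: s => [|t1 [|t2 [|t3 [|]]]] //= _ Hs.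
rewrite br_anti; apply/eqP; rewrite oppr_eq0; apply/eqP.
by apply: Hs; rewrite !inE eqxx !orbT.
Qed.


Lemma step p q x : br (br (br p q) x) x = 0 -> br (br p q) x = 0.
Proof. move=> h; apply: H2 => //; exact: H1. Qed.

Lemma foldl_nseq n x u : foldl br u (nseq n x) = iter n (fun w => br w x) u.
Proof. by elim: n u => [|n IH] u //=; rewrite IH -iterSr. Qed.

Lemma nil_S (I : B -> Prop) x : nilpotent_ideal br I -> I x -> forall y, br (br x y) x = 0.
Proof.
move=> [[I0 ID Ibr] [n Hn]] Ix y.
set u := br y x.
have Iu : I u by apply: Ibr.
have Hz : iter n (fun w => br w x) u = 0.
  rewrite -foldl_nseq; have := Hn (u :: nseq n x).
  rewrite /= size_nseq; apply=> // v; rewrite inE => /orP[/eqP->//|].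
  by move/nseqP => [->].
have key : forall k, iter k.+1 (fun w => br w x) u = 0 -> br u x = 0.
  elim=> [//|k IH] h; apply: IH.
  have [p [q E]] : exists p q, iter k (fun w => br w x) u = br p q.
    by clear; case: k => [|k]; [exists y, x | exists (iter k (fun w => br w x) u), x].
  by rewrite /= E in h *; apply: step.
have : br u x = 0.
  clear Hn; case: n Hz => [/= ->|n]; first by rewrite br0l.
  exact: key.
by rewrite /u => h; rewrite (br_anti x y) brNl h oppr0.
Qed.

Lemma Fit_T b : Fit br b <-> T b.
Proof.
split.
- move=> [s [Hs ->]].
  elim: s Hs => [|x s IH] Hs; first by rewrite big_nil => p q; rewrite br0l.
  rewrite big_cons => p q; rewrite brDl.
  have [I [NI Ix]] := Hs x (mem_head _ _).
  rewrite (@S_T x (@nil_S I x NI Ix)) add0r; apply: IH => v vs.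
  by apply: Hs; rewrite inE vs orbT.
- move=> Tb; exists [:: b]; split; last by rewrite big_seq1.
  by move=> x; rewrite inE => /eqP->; exists T; split => //; exact: T_nil.
Qed.

End Aux.

Section Two.
Variable K : fieldType.
Definition M2 : lmodType K := (K^o * K^o)%type.
Definition br2 (x y : M2) : M2 := (0, x.1 * y.2 - x.2 * y.1).

Lemma sc2 (c : K) (p : M2) : c *: p = ((c * p.1 : K) : K^o, (c * p.2 : K) : K^o).
Proof. by case: p. Qed.
Lemma ad2 (p q : M2) : p + q = ((p.1 + q.1 : K) : K^o, (p.2 + q.2 : K) : K^o).
Proof. by case: p; case: q. Qed.
Lemma z2 : (0 : M2) = ((0 : K) : K^o, (0 : K) : K^o).
Proof. by []. Qed.

Lemma br2_lie : is_lie br2.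
Proof.
split.
- move=> c [a1 a2] [b1 b2] [c1 c2]; rewrite /br2 !sc2 !ad2 /=.
  by congr (_, _); [rewrite mulr0 addr0 | ring].
- move=> c [a1 a2] [b1 b2] [c1 c2]; rewrite /br2 !sc2 !ad2 /=.
  by congr (_, _); [rewrite mulr0 addr0 | ring].
- move=> [a1 a2]; rewrite /br2 /=; congr (_, _).
  by rewrite /= mulrC subrr.
- move=> [a1 a2] [b1 b2] [c1 c2]; rewrite /br2 !ad2 /=.
  by congr (_, _); [rewrite !addr0 | ring].
Qed.

Lemma br2_met : metabelian br2.
Proof. by move=> x1 x2 x3 x4; rewrite /br2 /= mul0r mulr0 subrr. Qed.

Lemma hom0 (V W : lmodType K) (bV : V -> V -> V) (bW : W -> W -> W) f :
  lie_hom bV bW f -> f 0 = 0.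
Proof.
move=> [L _]; have h := L 1 0 0; rewrite scale1r addr0 scale1r in h.
by apply: (addrI (f 0)); rewrite addr0 -h.
Qed.

Lemma free_neq0 r (F : lmodType K) (brF : F -> F -> F) (a : 'I_r -> F)
  (h0 : (0 < r)%N) (h1 : (1 < r)%N) :
  is_free_metabelian brF a -> brF (a (Ordinal h0)) (a (Ordinal h1)) <> 0.
Proof.
move=> [_ _ U] E.
have [f [[fL fB] fa _]] := U M2 br2
  (fun k => if val k == 0%N then ((1 : K) : K^o, (0 : K) : K^o)
            else ((0 : K) : K^o, (1 : K) : K^o)) br2_lie br2_met.
have := fB (a (Ordinal h0)) (a (Ordinal h1)).
rewrite E (@hom0 _ _ _ _ _ (conj fL fB)) !fa /= /br2 /= => /(congr1 snd) /= /eqP.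
by rewrite mulr1 mul0r subr0 eq_sym oner_eq0.
Qed.
End Two.

Theorem lemma3p3 (K : fieldType) (B : lmodType K) (br : B -> B -> B) :
  is_lie br -> Phi1 br -> Phi2 br -> Phi3 br ->
  (forall b : B, (forall y : B, br (br b y) b = 0) <-> Fit br b) /\
  (forall (r : nat) (F : lmodType K) (brF : F -> F -> F) (a : 'I_r -> F)
          (phi : F -> B),
     (2 <= r)%N -> is_free_metabelian brF a ->
     lie_hom brF br phi -> injective phi ->
     forall b : B, (forall i : 'I_r, br (br b (phi (a i))) b = 0) <-> Fit br b).
Proof.
move=> HL H1 H2 H3.
have FT := @Fit_T K B br HL H1 H2 H3.
split.
  move=> b; rewrite FT; split; [exact: S_T | exact: T_S].
move=> r F brF a phi r2 Hfree Hhom Hinj b; rewrite FT; split; last first.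
  by move=> Tb i; apply: T_S.
move=> Hb.
have h0 : (0 < r)%N by apply: leq_trans r2.
have h1 : (1 < r)%N by [].
have gen : forall i, br b (phi (a i)) <> 0 -> T K B br b.
  move=> i Hu p q; apply: (H3 _ _ _ Hu (Hb i)); exact: H1.
case: (eqVneq (br b (phi (a (Ordinal h0)))) 0) => E0; last by apply: (gen (Ordinal h0)); apply/eqP.
case: (eqVneq (br b (phi (a (Ordinal h1)))) 0) => E1; last by apply: (gen (Ordinal h1)); apply/eqP.
case: (eqVneq b 0) => [-> p q|Hb0]; first by apply: br0l.
have Hb0' : b <> 0 by apply/eqP.
have := H3 _ _ _ Hb0' E0 E1.
case: Hhom => hL hB; rewrite -hB -(@hom0 K _ _ brF br phi (conj hL hB)) => /Hinj.
by move=> E; exfalso; exact: (@free_neq0 K r F brF a h0 h1 Hfree E).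
Qed.
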